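(* Let $(X,\preceq)$ be a partially ordered set and suppose there is a metric $d$ on $X$ such that $(X,d)$ is complete. Let $f,g,H:X\to X$ be mappings such that: (a) $f(X)\subseteq H(X)$ and $g(X)\subseteq H(X)$; (b) $f$, $g$ and $H$ are continuous; (c) the pairs $\{f,H\}$ and $\{g,H\}$ are compatible; (d) $f$ and $g$ are weakly increasing with respect to $H$. Suppose there is $\beta\in\mathcal S$ such that for every $(x,y)\in X\times X$ with $Hx$ and $Hy$ comparable, $$d(fx,gy)\le \beta\big(d(Hx,Hy)\big)\,d(Hx,Hy).$$ Then $f$, $g$ and $H$ have a coincidence point, i.e. there exists $u\in X$ with $fu=gu=Hu$.
   Context: $\mathcal S$ denotes the class of functions $\beta:[0,\infty)\to[0,1)$ such that for every sequence $(t_n)$ in $[0,\infty)$, $\beta(t_n)\to 1$ implies $t_n\to 0$. A pair $\{f,g\}$ of self-maps of a metric space $(X,d)$ is compatible if $\lim_{n\to\infty} d(fgx_n,gfx_n)=0$ whenever $(x_n)$ is a sequence in $X$ with $\lim fx_n=\lim gx_n=t$ for some $t\in X$. For $R:X\to X$ and $x\in X$, $R^{-1}(x)=\{u\in X: Ru=x\}$. Given mappings $T,S,R:X\to X$ on a partially ordered set with $T(X)\subseteq R(X)$ and $S(X)\subseteq R(X)$, $S$ and $T$ are weakly increasing with respect to $R$ if for all $x\in X$: $Tx\preceq Sy$ for all $y\in R^{-1}(Tx)$, and $Sx\preceq Ty$ for all $y\in R^{-1}(Sx)$. A coincidence point of maps $T_1,\dots,T_N$ is a point $x$ with $T_1x=\dots=T_Nx$.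 *)

(* Defs.v *)
From Stdlib Require Import Reals.
Open Scope R_scope.

Definition is_metric {X : Type} (d : X -> X -> R) : Prop :=
  (forall x y, 0 <= d x y) /\
  (forall x y, d x y = 0 <-> x = y) /\
  (forall x y, d x y = d y x) /\
  (forall x y z, d x z <= d x y + d y z).

Definition is_partial_order {X : Type} (le : X -> X -> Prop) : Prop :=
  (forall x, le x x) /\
  (forall x y, le x y -> le y x -> x = y) /\
  (forall x y z, le x y -> le y z -> le x z).

Definition seq_conv {X : Type} (d : X -> X -> R) (u : nat -> X) (l : X) : Prop :=
  forall eps, eps > 0 -> exists N, forall n, (n >= N)%nat -> d (u n) l < eps.

Definition seq_cauchy {X : Type} (d : X -> X -> R) (u : nat -> X) : Prop :=
  forall eps, eps > 0 -> exists N, forall m n, (m >= N)%nat -> (n >= N)%nat ->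
    d (u m) (u n) < eps.

Definition complete_metric {X : Type} (d : X -> X -> R) : Prop :=
  forall u, seq_cauchy d u -> exists l, seq_conv d u l.

Definition continuous_map {X : Type} (d : X -> X -> R) (f : X -> X) : Prop :=
  forall x eps, eps > 0 -> exists delta, delta > 0 /\
    forall y, d x y < delta -> d (f x) (f y) < eps.

(* Class S: beta : [0,oo) -> [0,1), beta(t_n) -> 1 implies t_n -> 0.
   beta is represented as a function R -> R; only its values on [0,oo) matter. *)
Definition class_S (beta : R -> R) : Prop :=
  (forall t, 0 <= t -> 0 <= beta t < 1) /\
  (forall t : nat -> R, (forall n, 0 <= t n) ->
     Un_cv (fun n => beta (t n)) 1 -> Un_cv t 0).

Definition compatible {X : Type} (d : X -> X -> R) (f g : X -> X) : Prop :=
  forall (x : nat -> X) (t : X),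
    seq_conv d (fun n => f (x n)) t -> seq_conv d (fun n => g (x n)) t ->
    Un_cv (fun n => d (f (g (x n))) (g (f (x n)))) 0.

Definition weakly_increasing_wrt {X : Type} (le : X -> X -> Prop)
    (T S Rm : X -> X) : Prop :=
  forall x,
    (forall y, Rm y = T x -> le (T x) (S y)) /\
    (forall y, Rm y = S x -> le (S x) (T y)).

(* Main.v *)
Require Import Defs.
From Stdlib Require Import Reals Lra Lia Classical ClassicalEpsilon.
Open Scope R_scope.

Lemma beta_bound (beta : R -> R) : class_S beta -> forall a, 0 < a ->
  exists eta, 0 <= eta < 1 /\ forall t, a <= t -> beta t <= eta.
Proof.
  intros [Hb Hs] a Ha.
  destruct (classic (exists eta, 0 <= eta < 1 /\ forall t, a <= t -> beta t <= eta)) as [E|NE]; [exact E|].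
  exfalso.
  assert (Hk : forall k : nat, exists t, a <= t /\ 1 - / INR (S k) < beta t).
  { intro k. apply NNPP. intro Hn. apply NE. exists (1 - / INR (S k)).
    assert (H1 : 1 <= INR (S k)) by (rewrite S_INR; pose proof (pos_INR k); lra).
    assert (H2 : 0 < / INR (S k)) by (apply Rinv_0_lt_compat; lra).
    assert (H3 : / INR (S k) <= 1) by (rewrite <- Rinv_1; apply Rinv_le_contravar; lra).
    split; [lra|]. intros t Ht. apply Rnot_lt_le. intro Hlt. apply Hn. exists t; auto. }
  set (t := fun k => proj1_sig (constructive_indefinite_description _ (Hk k))).
  assert (Ht : forall k, a <= t k /\ 1 - / INR (S k) < beta (t k)).
  { intro k. unfold t. destruct (constructive_indefinite_description _ (Hk k)); auto. }
  assert (Hc : Un_cv t 0).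
  { apply Hs. intro n; destruct (Ht n); lra.
    intros eps Heps. destruct (archimed_cor1 eps Heps) as [N [HN1 HN2]].
    exists N. intros n Hn. destruct (Ht n) as [A B].
    assert (0 <= t n) by lra. destruct (Hb _ H) as [C D].
    assert (/ INR (S n) <= / INR N).
    { apply Rinv_le_contravar. apply lt_0_INR; lia. apply le_INR; lia. }
    unfold R_dist. rewrite Rabs_left1 by lra. lra. }
  destruct (Hc a Ha) as [N HN]. specialize (HN N (le_n N)).
  unfold R_dist in HN. destruct (Ht N) as [A _]. rewrite Rabs_right in HN by lra. lra.
Qed.

Lemma even_S n : Nat.even (S n) = negb (Nat.even n).
Proof. induction n; [reflexivity|]. change (Nat.even (S (S n))) with (Nat.even n). rewrite IHn. destruct (Nat.even n); reflexivity. Qed.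

Lemma compat_eq {X : Type} (d : X -> X -> R) (F G : X -> X) (s : nat -> X) (z : X) :
  is_metric d -> continuous_map d F -> continuous_map d G -> compatible d F G ->
  seq_conv d (fun k => F (s k)) z -> seq_conv d (fun k => G (s k)) z -> F z = G z.
Proof.
  intros [Hp [Hz [Hsym Htr]]] cF cG cFG cvF cvG.
  specialize (cFG s z cvF cvG).
  apply Hz. destruct (Hp (F z) (G z)) as [Hlt|Heq]; [|auto].
  exfalso. remember (d (F z) (G z)) as e eqn:Ee.
  destruct (cF z (e/3) ltac:(lra)) as [d1 [d1p Hd1]].
  destruct (cG z (e/3) ltac:(lra)) as [d2 [d2p Hd2]].
  destruct (cvG d1 d1p) as [N1 HN1]. destruct (cvF d2 d2p) as [N2 HN2].
  destruct (cFG (e/3) ltac:(lra)) as [N3 HN3].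
  set (k := (N1 + N2 + N3)%nat).
  specialize (HN1 k ltac:(unfold k; lia)). specialize (HN2 k ltac:(unfold k; lia)).
  specialize (HN3 k ltac:(unfold k; lia)). unfold R_dist in HN3.
  rewrite Rminus_0_r, Rabs_right in HN3 by (apply Rle_ge; apply Hp).
  rewrite Hsym in HN1, HN2.
  specialize (Hd1 _ HN1). specialize (Hd2 _ HN2).
  pose proof (Htr (F z) (F (G (s k))) (G z)).
  pose proof (Htr (F (G (s k))) (G (F (s k))) (G z)).
  rewrite (Hsym (G (F (s k))) (G z)) in H0. lra.
Qed.

Lemma subseq_conv {X : Type} (d : X -> X -> R) (y : nat -> X) (z : X) (phi : nat -> nat) :
  (forall k, (phi k >= k)%nat) -> seq_conv d y z -> seq_conv d (fun k => y (phi k)) z.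
Proof.
  intros Hphi H eps He. destruct (H eps He) as [N HN]. exists N. intros n Hn.
  apply HN. specialize (Hphi n). lia.
Qed.

Lemma D_to_0 (D : nat -> R) (beta : R -> R) : class_S beta ->
  (forall n, 0 <= D n) -> (forall n, D (S n) <= beta (D n) * D n) ->
  forall eps, 0 < eps -> exists N, forall n, (n >= N)%nat -> D n < eps.
Proof.
  intros Hb Hp HD eps He.
  assert (Hdec : forall n, D (S n) <= D n).
  { intro n. destruct (proj1 Hb (D n) (Hp n)). specialize (HD n). specialize (Hp n). nra. }
  destruct (classic (exists n, D n < eps)) as [[n Hn]|Hn].
  - exists n. intros k Hk. induction Hk; auto. specialize (Hdec m). lra.
  - exfalso. assert (Hge : forall n, eps <= D n).
    { intro n. apply Rnot_lt_le. intro. apply Hn. eauto. }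
    destruct (beta_bound beta Hb eps He) as [eta [[h0 h1] Heta]].
    assert (Hpow : forall n, D n <= eta ^ n * D 0%nat).
    { induction n. simpl; lra. simpl.
      specialize (HD n). specialize (Heta _ (Hge n)). specialize (Hp n).
      assert (beta (D n) * D n <= eta * D n) by (apply Rmult_le_compat_r; auto).
      assert (eta * D n <= eta * (eta ^ n * D 0%nat)) by (apply Rmult_le_compat_l; auto). lra. }
    assert (Habs : Rabs eta < 1) by (rewrite Rabs_right; lra).
    assert (Hp0 := Hp 0%nat).
    destruct (pow_lt_1_zero eta Habs (eps / (D 0%nat + 1))) as [N HN].
    { apply Rdiv_lt_0_compat; lra. }
    specialize (HN N (le_n N)). pose proof (pow_le eta N h0).
    rewrite Rabs_right in HN by lra.
    assert (eta ^ N * (D 0%nat + 1) < eps).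
    { apply (Rmult_lt_compat_r (D 0%nat + 1)) in HN; [|lra].
      unfold Rdiv in HN. rewrite Rmult_assoc, Rinv_l, Rmult_1_r in HN by lra. exact HN. }
    specialize (Hpow N). specialize (Hge N). nra.
Qed.

Lemma cauchy_K {X : Type} (d : X -> X -> R) (y : nat -> X) (beta : R -> R) :
  is_metric d -> class_S beta ->
  (forall m n, Nat.even m <> Nat.even n ->
     d (y (S m)) (y (S n)) <= beta (d (y m) (y n)) * d (y m) (y n)) ->
  seq_cauchy d y.
Proof.
  intros [Hp [Hz [Hsym Htr]]] Hb K eps He.
  assert (Hn : forall n, Nat.even n <> Nat.even (S n)).
  { intro n. rewrite even_S. destruct (Nat.even n); discriminate. }
  destruct (beta_bound beta Hb (eps/2) ltac:(lra)) as [eta [[h0 h1] Heta]].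
  set (delta := (1 - eta) * eps / 8).
  assert (Hdel : 0 < delta) by (unfold delta; apply Rdiv_lt_0_compat; [apply Rmult_lt_0_compat|]; lra).
  assert (Hdel2 : delta <= eps / 8) by (unfold delta; nra).
  destruct (D_to_0 (fun n => d (y n) (y (S n))) beta Hb (fun n => Hp _ _)
     (fun n => K n (S n) (Hn n)) delta Hdel) as [N HN].
  assert (Opp : forall m n, (m >= N)%nat -> (n >= N)%nat -> Nat.even m <> Nat.even n ->
     d (y m) (y n) < eps / 2).
  { intros m n Hm Hn' Hmn. apply Rnot_le_lt. intro Hge.
    pose proof (HN m Hm). pose proof (HN n Hn'). simpl in *.
    pose proof (K m n Hmn). pose proof (Heta _ Hge).
    pose proof (Htr (y m) (y (S m)) (y n)).
    pose proof (Htr (y (S m)) (y (S n)) (y n)).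
    rewrite (Hsym (y (S n)) (y n)) in H4.
    assert (beta (d (y m) (y n)) * d (y m) (y n) <= eta * d (y m) (y n))
      by (apply Rmult_le_compat_r; auto).
    assert ((1 - eta) * d (y m) (y n) < 2 * delta) by lra.
    assert ((1 - eta) * d (y m) (y n) >= (1 - eta) * (eps/2)) by nra.
    unfold delta in H6. nra. }
  exists N. intros m n Hm Hn'.
  destruct (Bool.bool_dec (Nat.even m) (Nat.even n)) as [Heq|Hneq].
  - assert (Nat.even m <> Nat.even (S n)) by (rewrite Heq; apply Hn).
    pose proof (Opp m (S n) Hm ltac:(lia) H).
    pose proof (HN n Hn'). simpl in H1.
    pose proof (Htr (y m) (y (S n)) (y n)). rewrite (Hsym (y (S n)) (y n)) in H2. lra.
  - pose proof (Opp m n Hm Hn' Hneq). lra.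
Qed.

Fixpoint seqx {X : Type} (pf pg : X -> X) (x0 : X) (k : nat) : X :=
  match k with
  | O => x0
  | S k => (if Nat.even k then pf else pg) (seqx pf pg x0 k)
  end.

Lemma ev2 n : Nat.even (2 * n) = true.
Proof. rewrite Nat.even_mul. reflexivity. Qed.

Theorem theorem2p5 (X : Type) (le : X -> X -> Prop) (d : X -> X -> R)
  (f g H : X -> X) (beta : R -> R) :
  inhabited X ->
  is_partial_order le ->
  is_metric d ->
  complete_metric d ->
  (forall x, exists y, H y = f x) ->
  (forall x, exists y, H y = g x) ->
  continuous_map d f -> continuous_map d g -> continuous_map d H ->
  compatible d f H -> compatible d g H ->
  weakly_increasing_wrt le f g H ->
  class_S beta ->
  (forall x y, (le (H x) (H y) \/ le (H y) (H x)) ->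
     d (f x) (g y) <= beta (d (H x) (H y)) * d (H x) (H y)) ->
  exists u, f u = g u /\ g u = H u.
Proof.
  intros [x0] [Hrefl [Hanti Htrans]] Hm Hcomp Hf Hg cf cg cH cfH cgH Hwi Hb Hc.
  set (pf := fun x => proj1_sig (constructive_indefinite_description _ (Hf x))).
  set (pg := fun x => proj1_sig (constructive_indefinite_description _ (Hg x))).
  assert (Hpf : forall x, H (pf x) = f x).
  { intro x; unfold pf; destruct (constructive_indefinite_description _ (Hf x)); auto. }
  assert (Hpg : forall x, H (pg x) = g x).
  { intro x; unfold pg; destruct (constructive_indefinite_description _ (Hg x)); auto. }
  clearbody pf pg.
  set (x := seqx pf pg x0).
  set (F := fun k : nat => if Nat.even k then f else g).
  set (y := fun k => H (x (S k))).
  assert (HyF : forall k, y k = F k (x k)).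
  { intro k. unfold y, F, x. simpl. destruct (Nat.even k); [apply Hpf|apply Hpg]. }
  assert (Hstep : forall k, le (y k) (y (S k))).
  { intro k. rewrite (HyF k), (HyF (S k)). unfold F. rewrite even_S.
    destruct (Hwi (x k)) as [W1 W2].
    assert (E : H (x (S k)) = F k (x k)) by (fold (y k); apply HyF).
    unfold F in E. destruct (Nat.even k); simpl.
    - apply W1; auto.
    - apply W2; auto. }
  assert (Hmono : forall m n, (m <= n)%nat -> le (y m) (y n)).
  { intros m n Hmn. induction Hmn; [apply Hrefl|]. eapply Htrans; eauto. }
  destruct Hm as [Hp [Hz [Hsym Htr]]].
  assert (K : forall m n, Nat.even m <> Nat.even n ->
     d (y (S m)) (y (S n)) <= beta (d (y m) (y n)) * d (y m) (y n)).
  { intros m n Hmn.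
    assert (Cmp : le (H (x (S m))) (H (x (S n))) \/ le (H (x (S n))) (H (x (S m)))).
    { destruct (Nat.le_ge_cases m n); [left|right]; apply Hmono; auto. }
    rewrite (HyF (S m)), (HyF (S n)). unfold y. unfold F. rewrite !even_S.
    destruct (Nat.even m) eqn:Em, (Nat.even n) eqn:En; try congruence; simpl.
    - rewrite (Hsym (g _)), (Hsym (H (x (S m)))). apply Hc. tauto.
    - apply Hc. auto. }
  assert (Hmet : is_metric d) by (unfold is_metric; repeat split; auto; apply Hz; auto).
  assert (Hcy : seq_cauchy d y) by (apply (cauchy_K d y beta Hmet Hb K)).
  destruct (Hcomp y Hcy) as [z Hz'].
  exists z.
  assert (E1 : f z = H z).
  { apply (compat_eq d f H (fun k => x (S (S (2 * k)))) z Hmet cf cH cfH).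
    - apply (subseq_conv d y z (fun k => S (S (2*k)))) in Hz'; [|intro; lia].
      intros e He. destruct (Hz' e He) as [N HN]. exists N. intros n Hn.
      specialize (HN n Hn). cbv beta in HN. rewrite HyF in HN. unfold F in HN.
      rewrite even_S, even_S, ev2 in HN. cbn [negb] in HN. exact HN.
    - apply (subseq_conv d y z (fun k => S (2*k))) in Hz'; [|intro; lia]. exact Hz'. }
  assert (E2 : g z = H z).
  { apply (compat_eq d g H (fun k => x (S (2 * k))) z Hmet cg cH cgH).
    - apply (subseq_conv d y z (fun k => S (2*k))) in Hz'; [|intro; lia].
      intros e He. destruct (Hz' e He) as [N HN]. exists N. intros n Hn.
      specialize (HN n Hn). cbv beta in HN. rewrite HyF in HN. unfold F in HN.
      rewrite even_S, ev2 in HN. cbn [negb] in HN. exact HN.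
    - apply (subseq_conv d y z (fun k => 2*k)%nat) in Hz'; [|intro; lia]. exact Hz'. }
  split; congruence.
Qed.
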